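(* Let $q,z,m,t$ be positive integers with $q\geq 2$, $z<q$ and $t<m$, and put $L=\lfloor\frac{q-1}{q-z}\rfloor$. Let $\mathbf{P}=(p_{\mathbf{a},\mathbf{b}})$ be the array (described in the context) with rows indexed by $$\mathcal{F}=\{\mathbf{a}=(a_0,\ldots,a_{m-1},\varepsilon_0,\ldots,\varepsilon_{t-1}) : a_0,\ldots,a_{m-1}\in\mathbb{Z}_q,\ \varepsilon_0,\ldots,\varepsilon_{t-1}\in\{0,1,\ldots,L-1\}\}$$ and columns indexed by $$\mathcal{K}=\{\mathbf{b}=(b_0,\ldots,b_{t-1},\delta_0,\ldots,\delta_{t-1}) : b_0,\ldots,b_{t-1}\in\mathbb{Z}_q,\ 0\leq\delta_0<\delta_1<\cdots<\delta_{t-1}<m\},$$ where for $\mathbf{a}\in\mathcal{F}$, $\mathbf{b}\in\mathcal{K}$: $p_{\mathbf{a},\mathbf{b}}=*$ if $a_{\delta_i}\in X_{b_i,z}:=\{b_i,b_i-1,\ldots,b_i-(z-1)\}$ for some $i\in\{0,\ldots,t-1\}$; otherwise $p_{\mathbf{a},\mathbf{b}}$ is the vector $(c_0,\ldots,c_{m-1},a_{\delta_0}-b_0-1,\ldots,a_{\delta_{t-1}}-b_{t-1}-1)$, where $c_{\delta_i}=b_i-\varepsilon_i(q-z)$ for $i\in\{0,\ldots,t-1\}$ and $c_l=a_l$ for $l\notin\{\delta_0,\ldots,\delta_{t-1}\}$ (all arithmetic modulo $q$). Then $\mathbf{P}$ is a $\big(\binom{m}{t}q^t,\ L^t q^m,\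 L^t(q^m-q^{m-t}(q-z)^t),\ (q-z)^t q^m\big)$ placement delivery array. In particular $Z/F=1-(\frac{q-z}{q})^t$ and $S/F=(q-z)^t/L^t$, so the associated coded caching scheme has $\frac{M}{N}=1-(\frac{q-z}{q})^t$ and rate $R=(q-z)^t/L^t$.
   Context: A $(K,F,Z,S)$ placement delivery array (PDA) is an $F\times K$ array whose entries are either a special symbol $*$ or one of $S$ distinct non-star symbols (identified with $1,\ldots,S$), such that: (C1) $*$ appears exactly $Z$ times in each column; (C2) each of the $S$ symbols occurs at least once; (C3) for any two distinct entries $p_{j_1,k_1}=p_{j_2,k_2}=s$ with $s$ a non-star symbol, we have $j_1\neq j_2$, $k_1\neq k_2$, and $p_{j_1,k_2}=p_{j_2,k_1}=*$. A $(K,F,Z,S)$ PDA yields an $F$-division coded caching scheme for $K$ users with memory ratio $M/N=Z/F$ and rate $R=S/F$. The non-star symbols of $\mathbf{P}$ are vectors in $\mathbb{Z}_q^{m+t}$. *)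

(* Defs.v *)
From HB Require Import structures.
From mathcomp Require Import all_boot all_order all_algebra.
Set Implicit Arguments. Unset Strict Implicit. Unset Printing Implicit Defensive.
Import GRing.Theory.

(* An F x K array whose rows are indexed by a finType Row (|Row| = F),
   columns by a finType Col (|Col| = K), and entries are either the star
   (None) or a non-star symbol (Some s, s : Sym). *)
Definition is_PDA (Row Col : finType) (Sym : eqType)
    (K F Z S : nat) (P : Row -> Col -> option Sym) : Prop :=
  [/\ #|Col| = K, #|Row| = F,
      (forall k : Col, #|[set j : Row | P j k == None]| = Z),
      (exists sym : seq Sym, uniq sym /\ size sym = S /\
         (forall s, s \in sym <-> exists j k, P j k = Some s)) &
      (forall j1 j2 k1 k2 s, (j1, k1) != (j2, k2) ->
          P j1 k1 = Some s -> P j2 k2 = Some s ->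
          [/\ j1 != j2, k1 != k2, P j1 k2 = None & P j2 k1 = None])].

Definition Lval (q z : nat) : nat := (q - 1) %/ (q - z).

Definition rowT (q z m t : nat) : finType :=
  ({ffun 'I_m -> 'Z_q} * {ffun 'I_t -> 'I_(Lval q z)})%type.

Definition col_raw (q m t : nat) : finType :=
  ({ffun 'I_t -> 'Z_q} * {ffun 'I_t -> 'I_m})%type.
Definition col_incr (q m t : nat) : pred (col_raw q m t) :=
  fun x => [forall i : 'I_t, forall j : 'I_t, (i < j)%N ==> (x.2 i < x.2 j)%N].
Definition colT (q m t : nat) : finType := {x : col_raw q m t | col_incr x}.

Definition symT (q m t : nat) : finType :=
  ({ffun 'I_m -> 'Z_q} * {ffun 'I_t -> 'Z_q})%type.

Definition Xset (q z : nat) (b : 'Z_q) : {set 'Z_q} :=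
  [set (b - (k%:R : 'Z_q))%R | k : 'I_z].

Definition pda_entry (q z m t : nat) (a : rowT q z m t) (b : colT q m t)
    : option (symT q m t) :=
  let av := a.1 in let eps := a.2 in
  let bv := (val b).1 in let del := (val b).2 in
  if [exists i : 'I_t, av (del i) \in Xset z (bv i)] then None
  else Some
    ([ffun l : 'I_m =>
        match [pick i : 'I_t | del i == l] with
        | Some i => (bv i - ((eps i : nat) * (q - z))%N%:R)%R
        | None => av l
        end],
     [ffun i : 'I_t => (av (del i) - bv i - 1)%R]).

(* Main.v *)
Require Import Defs.
From mathcomp Require Import all_boot all_order all_algebra.
From mathcomp Require Import ring zify.
Import GRing.Theory.
Set Implicit Arguments. Unset Strict Implicit. Unset Printing Implicit Defensive.

Lemma valZn p n : n < p.+2 -> nat_of_ord (n%:R : 'Z_(p.+2))%R = n.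
Proof. by move=> h; rewrite val_Zp_nat // modn_small. Qed.

Lemma natZ_inj p n k : n < p.+2 -> k < p.+2 -> (n%:R : 'Z_(p.+2))%R = (k%:R)%R -> n = k.
Proof. by move=> hn hk e; rewrite -(valZn hn) -(valZn hk) e. Qed.

Lemma natZ_neq0 p n : 0 < n < p.+2 -> (n%:R : 'Z_(p.+2))%R <> 0%R.
Proof. move=> /andP[h0 h1] e. by have := valZn h1; rewrite e /= => E; rewrite -E in h0. Qed.

Lemma offset p (x y : 'Z_(p.+2)) E :
  (x - (y - E%:R) = ((nat_of_ord (x - y - 1)%R).+1 + E)%N%:R)%R.
Proof. rewrite natrD mulrSr natr_Zp. ring. Qed.

Lemma Xset_mem p z (x b : 'Z_(p.+2)) : z < p.+2 ->
  (x \in Xset z b) = (p.+2 - z <= nat_of_ord (x - b - 1)%R).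
Proof.
move=> hz; set n := nat_of_ord (x - b - 1)%R.
have hn : n < p.+2 by exact: ltn_ord.
have hx : x = (b + (n.+1)%:R)%R.
  rewrite mulrSr /n natr_Zp; ring.
apply/imsetP/idP.
- case=> k _ e; rewrite leqNgt; apply/negP => hlt.
  have h0 : ((n.+1 + k)%:R : 'Z_(p.+2))%R = 0%R.
    rewrite natrD; move: e; rewrite hx => e.
    have -> : ((n.+1)%:R = (b + (n.+1)%:R) - b :> 'Z_(p.+2))%R by ring.
    rewrite e; ring.
  have hk := ltn_ord k.
  apply: (@natZ_neq0 p (n.+1 + k)) => //; apply/andP; split; lia.
- move=> h.
  have hk : p.+2 - n.+1 < z by lia.
  exists (Ordinal hk) => //=.
  rewrite hx; apply/eqP; rewrite -subr_eq0.
  have -> : (b + (n.+1)%:R - (b - (p.+2 - n.+1)%:R) = ((n.+1 + (p.+2 - n.+1))%:R : 'Z_(p.+2)))%R.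
    rewrite natrD; ring.
  have -> : n.+1 + (p.+2 - n.+1) = p.+2 by lia.
  by rewrite pchar_Zp.
Qed.

Lemma del_lt q m t (b : colT q m t) (i j : 'I_t) : i < j -> (val b).2 i < (val b).2 j.
Proof. case: b => [x hx] /=; by move/forallP: hx => /(_ i)/forallP/(_ j)/implyP. Qed.

Lemma del_inj q m t (b : colT q m t) : injective (val b).2.
Proof.
move=> i j e; case: (ltngtP i j) => [h|h|h]; last exact: val_inj.
- by have := del_lt b h; rewrite e ltnn.
- by have := del_lt b h; rewrite e ltnn.
Qed.

Lemma pick_del q m t (b : colT q m t) i : [pick j | (val b).2 j == (val b).2 i] = Some i.
Proof.
case: pickP => [j /eqP/del_inj -> // | /(_ i)]; by rewrite eqxx.
Qed.

Definition nonstar p z m t (a : rowT p.+2 z m t) (b : colT p.+2 m t) :=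
  [forall i, nat_of_ord (a.1 ((val b).2 i) - (val b).1 i - 1)%R < p.+2 - z].

Definition symb p z m t (a : rowT p.+2 z m t) (b : colT p.+2 m t) : symT p.+2 m t :=
    ([ffun l : 'I_m =>
        match [pick i : 'I_t | (val b).2 i == l] with
        | Some i => ((val b).1 i - ((a.2 i : nat) * (p.+2 - z))%N%:R)%R
        | None => a.1 l
        end],
     [ffun i : 'I_t => (a.1 ((val b).2 i) - (val b).1 i - 1)%R]).

Lemma entryE p z m t (a : rowT p.+2 z m t) (b : colT p.+2 m t) : z < p.+2 ->
  pda_entry a b = if nonstar a b then Some (symb a b) else None.
Proof.
move=> hz; rewrite /pda_entry.
have -> : [exists i, a.1 ((val b).2 i) \in Xset z ((val b).1 i)] = ~~ nonstar a b.
  rewrite /nonstar negb_forall; apply: eq_existsb => i; by rewrite Xset_mem // -leqNgt.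
by case: (nonstar a b).
Qed.

Lemma symb1_del p z m t (a : rowT p.+2 z m t) (b : colT p.+2 m t) i :
  (symb a b).1 ((val b).2 i) = ((val b).1 i - ((a.2 i : nat) * (p.+2 - z))%N%:R)%R.
Proof. by rewrite /symb /= ffunE pick_del. Qed.

Lemma symb1_out p z m t (a : rowT p.+2 z m t) (b : colT p.+2 m t) l :
  (forall i, (val b).2 i != l) -> (symb a b).1 l = a.1 l.
Proof.
move=> h; rewrite /symb /= ffunE; case: pickP => [j /eqP e|//].
by have := h j; rewrite e eqxx.
Qed.

Lemma symb2 p z m t (a : rowT p.+2 z m t) (b : colT p.+2 m t) i :
  (symb a b).2 i = (a.1 ((val b).2 i) - (val b).1 i - 1)%R.
Proof. by rewrite /symb /= ffunE. Qed.

Lemma bound q z e n : 0 < z < q -> e < Lval q z -> n < q - z -> n.+1 + e * (q - z) < q.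
Proof.
move=> hz he hn.
have h1 := leq_trunc_div (q - 1) (q - z).
rewrite -/(Lval q z) in h1.
nia.
Qed.

Lemma epsb p z m t (a : rowT p.+2 z m t) i : 0 < z < p.+2 -> (a.2 i : nat) * (p.+2 - z) < p.+2.
Proof.
move=> hz; have := @bound p.+2 z (a.2 i) 0 hz (ltn_ord _). 
have : 0 < p.+2 - z by lia.
move=> h0 /(_ h0); lia.
Qed.

Lemma rowA p z m t (a a' : rowT p.+2 z m t) (b : colT p.+2 m t) : 0 < z < p.+2 ->
  symb a b = symb a' b -> a = a'.
Proof.
move=> hz e.
have ed i : a.1 ((val b).2 i) = a'.1 ((val b).2 i).
  by have := congr1 (fun s : symT p.+2 m t => s.2 i) e; rewrite /= !symb2 => /addIr/addIr.
have e1 : a.1 = a'.1.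
  apply/ffunP => l; case: (pickP (fun j => (val b).2 j == l)) => [j /eqP <- | h].
    exact: ed.
  have := congr1 (fun s : symT p.+2 m t => s.1 l) e; rewrite /= !symb1_out // => j; by rewrite h.
have e2 : a.2 = a'.2.
  apply/ffunP => i; apply: val_inj.
  have := congr1 (fun s : symT p.+2 m t => s.1 ((val b).2 i)) e; rewrite /= !symb1_del.
  move=> /addrI/oppr_inj/natZ_inj.
  move=> /(_ (epsb a i hz) (epsb a' i hz))/eqP.
  rewrite eqn_pmul2r; [by move/eqP | lia].
by case: a a' e1 e2 {ed e} => [? ?] [? ?] /= -> ->.
Qed.

Lemma incr_id n (s : 'I_n -> 'I_n) : (forall i j : 'I_n, i < j -> s i < s j) -> forall i, s i = i.
Proof.
move=> H.
have ge : forall k (i : 'I_n), nat_of_ord i = k -> k <= s i.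
  elim=> [//|k IH] i hi.
  have hk : k < n by have := ltn_ord i; lia.
  have := IH (Ordinal hk) erefl.
  have hki : Ordinal hk < i by rewrite /= hi.
  have := H (Ordinal hk) i hki.
  simpl; lia.
have le : forall k (i : 'I_n), n - i = k.+1 -> s i <= i.
  elim=> [|k IH] i hi.
    have := ltn_ord (s i); lia.
  have hk : i.+1 < n by lia.
  have hn : n - Ordinal hk = k.+1 by rewrite /=; lia.
  have := IH (Ordinal hk) hn.
  have hki : i < Ordinal hk by rewrite /=.
  have := H i (Ordinal hk) hki.
  simpl; lia.
move=> i; apply: val_inj; apply/eqP; rewrite eqn_leq (ge _ i erefl) andbT.
have hi := ltn_ord i.
have hn : n - i = (n - i).-1.+1 by lia.
exact: (le (n - i).-1 i hn).
Qed.

Lemma colB p z m t (a a' : rowT p.+2 z m t) (b b' : colT p.+2 m t) : 0 < z < p.+2 ->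
  nonstar a b -> nonstar a' b' -> nonstar a b' -> symb a b = symb a' b' -> b = b'.
Proof.
move=> hz nab na'b' nab' e.
have hd : 0 < p.+2 - z by lia.
have h2 : forall i, exists j, (val b).2 j = (val b').2 i.
  move=> i; case: (pickP (fun j => (val b).2 j == (val b').2 i)) => [j /eqP ej| h].
    by exists j.
  exfalso.
  have c_out := @symb1_out p z m t a b ((val b').2 i).
  have hh : forall j, (val b).2 j != (val b').2 i by move=> j; rewrite h.
  move/(_ hh) in c_out.
  have c_in := symb1_del a' b' i.
  rewrite e c_in in c_out.
  have := offset (a.1 ((val b').2 i)) ((val b').1 i) ((a'.2 i : nat) * (p.+2 - z)).
  rewrite c_out subrr => /esym; apply: natZ_neq0.
  have := @bound p.+2 z (a'.2 i) _ hz (ltn_ord _).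
  move/forallP: nab' => /(_ i) hn /(_ _ hn).
  lia.
pose sg i := odflt i [pick j | (val b).2 j == (val b').2 i].
have hs : forall i, (val b).2 (sg i) = (val b').2 i.
  move=> i; rewrite /sg; case: pickP => [j /eqP //|h].
  by case: (h2 i) => j ej; have := h j; rewrite ej eqxx.
have sinc : forall i j : 'I_t, i < j -> sg i < sg j.
  move=> i j lij; have := del_lt b' lij; rewrite -!hs => hl.
  case: (ltngtP (sg i) (sg j)) => [//|h|h].
  - by have := del_lt b h; lia.
  - by move/val_inj: h => h; rewrite h ltnn in hl.
have hdel : forall i, (val b).2 i = (val b').2 i.
  move=> i; by rewrite -hs (incr_id sinc).
have hbv : forall i, (val b).1 i = (val b').1 i.
  move=> i.
  have := congr1 (fun s : symT p.+2 m t => s.1 ((val b).2 i)) e.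
  rewrite /= symb1_del hdel symb1_del => ec.
  have o1 := offset (a.1 ((val b).2 i)) ((val b).1 i) ((a.2 i : nat) * (p.+2 - z)).
  have o2 := offset (a.1 ((val b).2 i)) ((val b').1 i) ((a'.2 i : nat) * (p.+2 - z)).
  rewrite ec o2 in o1.
  move/forallP: nab => /(_ i) n1.
  move/forallP: nab' => /(_ i); rewrite -hdel => n2.
  have b1 := @bound p.+2 z (a.2 i) _ hz (ltn_ord _) n1.
  have b2 := @bound p.+2 z (a'.2 i) _ hz (ltn_ord _) n2.
  move/(natZ_inj b2 b1): o1 => en.
  set x1 := nat_of_ord _ in n1 b1 en.
  set x2 := nat_of_ord _ in n2 b2 en.
  have en' : (a'.2 i * (p.+2 - z) + x2 = a.2 i * (p.+2 - z) + x1)%N by lia.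
  have := congr1 (modn ^~ (p.+2 - z)) en'.
  rewrite /= !modnMDl !modn_small // => ex.
  have : (a.1 ((val b).2 i) - (val b).1 i - 1)%R = (a.1 ((val b).2 i) - (val b').1 i - 1)%R.
    by apply: val_inj; exact: (esym ex).
  by move/addIr/addrI/oppr_inj.
apply: val_inj; case: b b' {e nab na'b' nab' h2 hs sinc sg} hdel hbv => [[bv d] hb] [[bv' d'] hb'] /= hdel hbv.
by congr pair; apply/ffunP.
Qed.

Lemma card_ffun_pred (aT rT : finType) (P : aT -> pred rT) :
  #|[set f : {ffun aT -> rT} | [forall x, P x (f x)]]| = \prod_(x : aT) #|P x|.
Proof.
have := @card_family aT (fun _ => rT) P.
rewrite foldrE big_image /= => <-.
apply: eq_card => f; rewrite inE; apply/forallP/familyP => h x; exact: h.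
Qed.

Lemma card_ltZ p n : n <= p.+2 -> #|[set y : 'Z_(p.+2) | nat_of_ord y < n]| = n.
Proof.
move=> hn.
have -> : [set y : 'Z_(p.+2) | nat_of_ord y < n] = widen_ord hn @: [set: 'I_n].
  apply/setP => y; rewrite inE; apply/idP/imsetP => [yn|[x _ ->]]; last exact: (ltn_ord x).
  by exists (Ordinal yn) => //; apply: val_inj.
rewrite card_imset ?cardsT ?card_ord //.
by move=> x y /(congr1 val) /= e; apply: val_inj.
Qed.

Lemma card_shiftZ p n (b : 'Z_(p.+2)) : n <= p.+2 ->
  #|[pred x : 'Z_(p.+2) | nat_of_ord (x - b - 1)%R < n]| = n.
Proof.
move=> hn; rewrite -[RHS](card_ltZ hn).
rewrite -(@card_preimset _ (fun x : 'Z_(p.+2) => x - b - 1)%R); last first.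
  by move=> x y /addIr/addIr.
by apply: eq_card => x; rewrite !inE.
Qed.

Lemma card_rows_a p z m t (b : colT p.+2 m t) : z < p.+2 ->
  #|[set av : {ffun 'I_m -> 'Z_(p.+2)} |
     [forall i, nat_of_ord (av ((val b).2 i) - (val b).1 i - 1)%R < p.+2 - z]]|
  = (p.+2 - z) ^ t * (p.+2) ^ (m - t).
Proof.
move=> hz.
set del := (val b).2; set bv := (val b).1.
pose P l := [pred x : 'Z_(p.+2) | [forall i, (del i == l) ==> (nat_of_ord (x - bv i - 1)%R < p.+2 - z)]].
have -> : [set av : {ffun 'I_m -> 'Z_(p.+2)} |
     [forall i, nat_of_ord (av (del i) - bv i - 1)%R < p.+2 - z]]
   = [set av : {ffun 'I_m -> 'Z_(p.+2)} | [forall l, P l (av l)]].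
  apply/setP => av; rewrite !inE; apply/forallP/forallP => h.
  - move=> l; apply/forallP => i; apply/implyP => /eqP <-; exact: h.
  - by move=> i; move/forallP: (h (del i)) => /(_ i); rewrite eqxx.
rewrite (card_ffun_pred P) (bigID (mem (codom del))) /=.
rewrite (eq_bigr (fun _ => p.+2 - z)); last first.
  move=> l /codomP [i0 ->].
  rewrite -[RHS](card_shiftZ (bv i0) (leq_subr z p.+2)).
  apply: eq_card => x; rewrite !inE; apply/forallP/idP => [/(_ i0)|h i].
    by rewrite eqxx.
  by apply/implyP => /eqP /del_inj ->.
rewrite [X in _ * X](eq_bigr (fun _ => p.+2)); last first.
  move=> l hl.
  rewrite (@eq_cardT _ (P l)) ?cardE ?size_enum_ord //=.
  move=> x; rewrite !inE; apply/forallP => i; apply/implyP => /eqP ei.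
  by rewrite -ei codom_f in hl.
rewrite (prod_nat_const (mem (codom del))) (prod_nat_const (predC (mem (codom del)))).
have ht : #|codom del| = t by rewrite card_codom ?card_ord //; exact: del_inj.
have := cardC (mem (codom del)); rewrite card_ord.
change #|mem (codom del)| with #|codom del|; rewrite ht => h.
have h2 : #|predC (mem (codom del))| = #|[predC mem (codom del)]| by apply: eq_card.
rewrite h2.
have -> : m - t = #|[predC mem (codom del)]| by rewrite -[m in m - _]h addKn.
by [].

Qed.

Lemma C1 p z m t (b : colT p.+2 m t) : 0 < z < p.+2 ->
  #|[set j : rowT p.+2 z m t | pda_entry j b == None]| =
  Lval p.+2 z ^ t * (p.+2 ^ m - p.+2 ^ (m - t) * (p.+2 - z) ^ t).
Proof.
move=> /andP[z0 hz].
have -> : [set j : rowT p.+2 z m t | pda_entry j b == None] = ~: [set j | nonstar j b].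
  by apply/setP => j; rewrite !inE entryE //; case: nonstar.
rewrite cardsCs setCK.
have -> : [set j : rowT p.+2 z m t | nonstar j b] =
   setX [set av : {ffun 'I_m -> 'Z_(p.+2)} |
     [forall i, nat_of_ord (av ((val b).2 i) - (val b).1 i - 1)%R < p.+2 - z]]
     [set: {ffun 'I_t -> 'I_(Lval p.+2 z)}].
  by apply/setP => -[av e]; rewrite !inE andbT.
rewrite cardsX card_rows_a // cardsT card_prod !card_ffun !card_ord /=.
by rewrite -mulnBl mulnC [(p.+2 - z) ^ t * _]mulnC.

Qed.

Lemma ratZ (Q L z m t : nat) : 0 < Q -> 0 < L -> t <= m -> z <= Q ->
  (((L ^ t * (Q ^ m - Q ^ (m - t) * (Q - z) ^ t))%:R / (L ^ t * Q ^ m)%:R : rat)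
   = 1 - ((Q - z)%:R / Q%:R) ^+ t)%R.
Proof.
move=> hQ hL htm hz.
have eQ : Q ^ m = Q ^ (m - t) * Q ^ t by rewrite -expnD subnK.
have hle : Q ^ (m - t) * (Q - z) ^ t <= Q ^ (m - t) * Q ^ t.
  apply: leq_mul => //; elim: (t) => // k IH; by rewrite !expnS leq_mul // leq_subr.
rewrite eQ natrM natrB // !natrM !natrX.
have q0 : (Q%:R : rat) != 0%R by rewrite Num.Theory.pnatr_eq0 -lt0n.
have l0 : (L%:R : rat) != 0%R by rewrite Num.Theory.pnatr_eq0 -lt0n.
rewrite expr_div_n.
have x0 : (L%:R ^+ t : rat) != 0%R by rewrite expf_neq0.
have y0 : (Q%:R ^+ (m - t) : rat) != 0%R by rewrite expf_neq0.
have w0 : (Q%:R ^+ t : rat) != 0%R by rewrite expf_neq0.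
field.
by rewrite x0 y0 w0.
Qed.

Lemma ratS (Q L z m t : nat) : 0 < Q -> 0 < L ->
  ((((Q - z) ^ t * Q ^ m)%:R / (L ^ t * Q ^ m)%:R : rat)
   = (Q - z)%:R ^+ t / L%:R ^+ t)%R.
Proof.
move=> hQ hL.
rewrite !natrM !natrX.
have q0 : (Q%:R : rat) != 0%R by rewrite Num.Theory.pnatr_eq0 -lt0n.
have l0 : (L%:R : rat) != 0%R by rewrite Num.Theory.pnatr_eq0 -lt0n.
have x0 : (L%:R ^+ t : rat) != 0%R by rewrite expf_neq0.
have y0 : (Q%:R ^+ m : rat) != 0%R by rewrite expf_neq0.
field.
by rewrite x0 y0.
Qed.

Lemma key p z m t (a a' : rowT p.+2 z m t) (b b' : colT p.+2 m t) : 0 < z < p.+2 ->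
  nonstar a b -> nonstar a' b' -> nonstar a b' -> symb a b = symb a' b' -> (a, b) = (a', b').
Proof.
move=> hz n1 n2 n3 e.
have eb := colB hz n1 n2 n3 e.
subst b'.
by rewrite (rowA hz e).
Qed.

Lemma C3 p z m t : 0 < z < p.+2 ->
  forall (j1 j2 : rowT p.+2 z m t) (k1 k2 : colT p.+2 m t) s, (j1, k1) != (j2, k2) ->
          pda_entry j1 k1 = Some s -> pda_entry j2 k2 = Some s ->
          [/\ j1 != j2, k1 != k2, pda_entry j1 k2 = None & pda_entry j2 k1 = None].
Proof.
move=> hz j1 j2 k1 k2 s hne.
have hz' : z < p.+2 by case/andP: hz.
rewrite !entryE //.
case N1: (nonstar j1 k1) => //; case N2: (nonstar j2 k2) => // -[e1] [e2].
have e : symb j1 k1 = symb j2 k2 by rewrite e1 e2.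
split.
- apply/negP => /eqP ej; subst j2.
  by have := key hz N1 N2 N2 e; move/eqP: hne.
- apply/negP => /eqP ek; subst k2.
  by have := rowA hz e => ej; subst j2; rewrite eqxx in hne.
- case N3: (nonstar j1 k2) => //.
  by have := key hz N1 N2 N3 e; move/eqP: hne.
- case N3: (nonstar j2 k1) => //.
  by have := key hz N2 N1 N3 (esym e) => -[ej ek]; subst; rewrite eqxx in hne.
Qed.

Lemma sorted_tupleP t m (s : t.-tuple 'I_m) :
  sorted ltn (map val s) = [forall i : 'I_t, forall j : 'I_t, (i < j) ==> (tnth s i < tnth s j)].
Proof.
rewrite (sorted_pairwise ltn_trans); apply/(pairwiseP 0)/forallP.
- move=> h i; apply/forallP => j; apply/implyP => lij.
  have hi : (nat_of_ord i) \in gtn (size [seq val i | i <- s]) by rewrite size_map size_tuple inE.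
  have hj : (nat_of_ord j) \in gtn (size [seq val i | i <- s]) by rewrite size_map size_tuple inE.
  have := h i j hi hj lij.
  have x0 : 'I_m := tnth s i.
  rewrite (nth_map x0) ?size_tuple // (nth_map x0) ?size_tuple //.
  by rewrite -(tnth_nth x0 s i) -(tnth_nth x0 s j).
- move=> h i j; rewrite !inE size_map size_tuple => hi hj lij.
  move/forallP: (h (Ordinal hi)) => /(_ (Ordinal hj)) /implyP /(_ lij).
  have x0 : 'I_m := tnth s (Ordinal hi).
  rewrite (nth_map x0) ?size_tuple // (nth_map x0) ?size_tuple //.
  by rewrite (tnth_nth x0 s (Ordinal hi)) (tnth_nth x0 s (Ordinal hj)).
Qed.

Lemma card_incr t m :
  #|[set d : {ffun 'I_t -> 'I_m} | [forall i : 'I_t, forall j : 'I_t, (i < j) ==> (d i < d j)]]| = 'C(m, t).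
Proof.
rewrite -card_ltn_sorted_tuples.
rewrite -(@card_imset _ _ (fun d : {ffun 'I_t -> 'I_m} => [tuple d i | i < t])); last first.
  move=> d1 d2 e; apply/ffunP => i.
  by have := congr1 (fun s => tnth s i) e; rewrite /= !tnth_mktuple.
apply: eq_card => s; rewrite [RHS]inE; apply/imsetP/idP.
- case=> d; rewrite inE => hd ->; rewrite sorted_tupleP.
  by apply/forallP => i; apply/forallP => j; rewrite !tnth_mktuple; move/forallP: hd => /(_ i)/forallP/(_ j).
- rewrite sorted_tupleP => hs; exists [ffun i => tnth s i].
    by rewrite inE; apply/forallP => i; apply/forallP => j; rewrite !ffunE; move/forallP: hs => /(_ i)/forallP/(_ j).
  by apply: eq_from_tnth => i; rewrite tnth_mktuple ffunE.
Qed.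

Lemma card_col p m t : #|colT p.+2 m t| = 'C(m, t) * p.+2 ^ t.
Proof.
rewrite card_sig.
have -> : #|[pred x : col_raw p.+2 m t | col_incr x]| =
   #|setX [set: {ffun 'I_t -> 'Z_(p.+2)}]
          [set d : {ffun 'I_t -> 'I_m} | [forall i : 'I_t, forall j : 'I_t, (i < j) ==> (d i < d j)]]|.
  by apply: eq_card => -[bv d]; rewrite !inE.
by rewrite cardsX card_incr cardsT card_ffun !card_ord mulnC.
Qed.

Lemma C2 p z m t : 0 < z < p.+2 -> t <= m ->
  exists sym : seq (symT p.+2 m t), uniq sym /\ size sym = (p.+2 - z) ^ t * p.+2 ^ m /\
     (forall s, s \in sym <-> exists j k, @pda_entry p.+2 z m t j k = Some s).
Proof.
move=> hz htm; have hz' : z < p.+2 by case/andP: hz.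
exists (enum [set x : symT p.+2 m t | [forall i, nat_of_ord (x.2 i) < p.+2 - z]]).
split; first exact: enum_uniq.
split.
  rewrite -cardE.
  have -> : [set x : symT p.+2 m t | [forall i, nat_of_ord (x.2 i) < p.+2 - z]] =
     setX [set: {ffun 'I_m -> 'Z_(p.+2)}]
       [set d : {ffun 'I_t -> 'Z_(p.+2)} | [forall i, (fun _ : 'I_t => [pred y : 'Z_(p.+2) | nat_of_ord y < p.+2 - z]) i (d i)]].
    by apply/setP => -[c d]; rewrite !inE.
  rewrite cardsX cardsT card_ffun card_ord (card_ffun_pred (fun _ : 'I_t => [pred y : 'Z_(p.+2) | nat_of_ord y < p.+2 - z])) .
  rewrite (eq_bigr (fun _ => p.+2 - z)); last first.
    move=> i _; rewrite -[RHS](card_ltZ (leq_subr z p.+2)).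
    by apply: eq_card => y; rewrite !inE.
  by rewrite big_const_ord iter_muln muln1 card_ord mulnC.
move=> s; rewrite mem_enum inE; split.
- case: s => c d hs.
  pose del0 : {ffun 'I_t -> 'I_m} := [ffun i => widen_ord htm i].
  have hinc : col_incr (([ffun i => c (del0 i)], del0) : col_raw p.+2 m t).
    by apply/forallP => i; apply/forallP => j; apply/implyP; rewrite /= !ffunE.
  pose b0 : colT p.+2 m t := exist (fun x : col_raw p.+2 m t => is_true (col_incr x)) _ hinc.
  have L0 : 0 < Lval p.+2 z by rewrite /Lval divn_gt0; lia.
  pose a0 : rowT p.+2 z m t := ([ffun l => match [pick i | del0 i == l] with Some i => (d i + c l + 1)%R | None => c l end], [ffun _ => Ordinal L0]).
  exists a0, b0; rewrite entryE //.
  have ha : forall i, a0.1 (del0 i) = (d i + c (del0 i) + 1)%R.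
    move=> i; rewrite /a0 /= ffunE.
    by have := pick_del b0 i; rewrite /= => ->.
  have hN : nonstar a0 b0.
    apply/forallP => i.
    change (nat_of_ord (a0.1 (del0 i) - [ffun i => c (del0 i)] i - 1)%R < p.+2 - z).
    rewrite ha ffunE.
    have -> : (d i + c (del0 i) + 1 - c (del0 i) - 1 = d i)%R by ring.
    by move/forallP: hs.
  rewrite hN; congr Some; rewrite /symb /b0 /=; congr pair.
  + apply/ffunP => l; rewrite ffunE.
    case: pickP => [i /eqP ei| hn]; last first.
      by rewrite /a0 /= ffunE; case: pickP => // i; rewrite hn.
    by rewrite !ffunE mul0n subr0 -ei ffunE.
  + apply/ffunP => i; rewrite ffunE.
    have := ha i; rewrite /a0 /= => ->; rewrite ffunE /del0 ffunE.
    rewrite ffunE; ring.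
- case=> j [k]; rewrite entryE //; case N: nonstar => // -[<-].
  by apply/forallP => i; rewrite symb2; move/forallP: N.
Qed.

Theorem theorem2 (q z m t : nat) :
  (2 <= q)%N -> (0 < z)%N -> (z < q)%N -> (0 < t)%N -> (t < m)%N ->
  let L := Lval q z in
  let K := 'C(m, t) * q ^ t in
  let F := L ^ t * q ^ m in
  let Z := L ^ t * (q ^ m - q ^ (m - t) * (q - z) ^ t) in
  let S := (q - z) ^ t * q ^ m in
  is_PDA K F Z S (@pda_entry q z m t) /\
  ((Z%:R / F%:R : rat) = 1 - ((q - z)%:R / q%:R) ^+ t)%R /\
  ((S%:R / F%:R : rat) = (q - z)%:R ^+ t / L%:R ^+ t)%R.
Proof.
case: q => [|[|p]] // hq hz0 hzq ht htm L K F Z S.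
rewrite /L /K /F /Z /S.
have hz : 0 < z < p.+2 by rewrite hz0 hzq.
have htm' : t <= m by apply: ltnW.
have L0 : 0 < Lval p.+2 z by rewrite /Lval divn_gt0; lia.
split; [split | split].
- exact: card_col.
- by rewrite /rowT card_prod !card_ffun !card_ord mulnC.
- by move=> k; apply: C1.
- exact: C2.
- exact: C3.
- by apply: ratZ => //; apply: ltnW.
- exact: ratS.
Qed.
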